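(* Let $P\subseteq\mathbb{R}^2$ be a convex polygon such that $\tau P=P^{\circ}$, and suppose there exist three consecutive vertices $u<v<w$ of $P$ in counterclockwise order such that the line $L_u$ contains both $v$ and $w$. Then $P$ has exactly $6$ vertices.
   Context: $\tau:\mathbb{R}^2\to\mathbb{R}^2$ denotes the $90^\circ$ counterclockwise rotation. The polar of $P$ is $P^{\circ}=\{x\in\mathbb{R}^2: y^\top x\le 1\text{ for all }y\in P\}$. For $u\in\mathbb{R}^2\setminus\{0\}$, $L_u=\{x\in\mathbb{R}^2:(\tau u)^\top x=1\}=\{x\in\mathbb{R}^2:\det(u,x)=1\}$. *)

(* Defs.v *)
From mathcomp Require Import all_boot all_order all_algebra.
From mathcomp Require Import reals.
Set Implicit Arguments. Unset Strict Implicit. Unset Printing Implicit Defensive.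
Import Order.TTheory GRing.Theory Num.Theory.
Local Open Scope ring_scope.

Section Plane.
Variable R : realType.
Definition pt := (R * R)%type.

Definition dotp (p q : pt) : R := p.1 * q.1 + p.2 * q.2.
Definition det2 (p q : pt) : R := p.1 * q.2 - p.2 * q.1.
Definition psub (p q : pt) : pt := (p.1 - q.1, p.2 - q.2).
Definition tau (p : pt) : pt := (- p.2, p.1).

Definition tau_img (P : pt -> Prop) : pt -> Prop :=
  fun x => exists y, P y /\ x = tau y.

Definition polar (P : pt -> Prop) : pt -> Prop :=
  fun x => forall y, P y -> dotp y x <= 1.

Definition Lline (u : pt) : pt -> Prop := fun x => dotp (tau u) x = 1.

Definition vtx (s : seq pt) (i : nat) : pt := nth (0, 0) s (i %% size s).

(* s lists the vertices of a convex polygon (with nonempty interior) in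
   counterclockwise order: every other vertex lies strictly to the left of
   each directed edge s_i -> s_{i+1}. *)
Definition ccw_convex_polygon (s : seq pt) : Prop :=
  (3 <= size s)%N /\
  forall i j : nat, (i < size s)%N -> (j < size s)%N ->
    j != i -> j != ((i + 1) %% size s)%N ->
    0 < det2 (psub (vtx s (i + 1)) (vtx s i)) (psub (vtx s j) (vtx s i)).

Definition conv_hull (s : seq pt) : pt -> Prop :=
  fun x => exists l : nat -> R,
    (forall i, (i < size s)%N -> 0 <= l i) /\
    \sum_(i < size s) l i = 1 /\
    x = (\sum_(i < size s) l i * (nth (0, 0) s i).1,
         \sum_(i < size s) l i * (nth (0, 0) s i).2).
End Plane.

(* Main.v *)
Require Import Defs.
From mathcomp Require Import all_boot all_order all_algebra.
From mathcomp Require Import reals.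
From mathcomp Require Import ring lra.
Import Order.TTheory GRing.Theory Num.Theory.
Local Open Scope ring_scope.

Section Alg.
Variable R : realType.
Implicit Types a b c d z : pt R.

Lemma key_contra a b c z : det2 a b = 1 -> det2 a c = 1 -> det2 z c = 1 ->
  det2 z b <= 1 -> det2 b c <= 1 -> 0 < det2 (psub b a) (psub c a) ->
  0 < det2 (psub b a) (psub z a) -> False.
Proof.
move=> ab ac zc zb bc H1 H2.
have E1 : det2 a c ^+ 2 * det2 z b =
  det2 a c * (det2 z c * det2 a b - det2 a z * det2 b c).
  by rewrite /det2; ring.
have E2 : det2 a c ^+ 2 * det2 (psub b a) (psub z a) =
  det2 a c * ((det2 b c - det2 a c) * det2 a z - det2 a b * (det2 z c - det2 a c)).
  by rewrite /det2 /psub /=; ring.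
have E3 : det2 (psub b a) (psub c a) = det2 b c + det2 a b - det2 a c.
  by rewrite /det2 /psub /=; ring.
rewrite ac ab zc expr1n !mul1r in E1 E2.
rewrite E3 ab ac in H1.
rewrite E2 in H2. rewrite E1 in zb.
move: H1 H2 zb bc. set be := det2 b c. set mu := det2 a z.
move=> H1 H2 zb bc. nra.
Qed.

Lemma collinear_contra a b c d : det2 a b = 1 -> det2 a c = 1 -> det2 a d = 1 ->
  0 < det2 (psub c b) (psub d b) -> False.
Proof.
move=> ab ac ad H.
have E : det2 a b * det2 (psub c b) (psub d b) =
  (det2 a c - det2 a b) * (det2 b d - det2 b b) - (det2 a d - det2 a b) * (det2 b c - det2 b b).
  by rewrite /det2 /psub /=; ring.
rewrite ab ac ad subrr !mul0r subrr mul1r in E.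
by rewrite E ltxx in H.
Qed.

Lemma recur a b c : det2 a b = 1 -> det2 a c = 1 -> det2 b c = 1 -> c = psub b a.
Proof.
move=> ab ac bc.
have E1 : det2 a b * c.1 = det2 c b * a.1 + det2 a c * b.1 by rewrite /det2; ring.
have E2 : det2 a b * c.2 = det2 c b * a.2 + det2 a c * b.2 by rewrite /det2; ring.
have cb : det2 c b = -1 by rewrite -bc /det2; ring.
rewrite ab ac cb !mul1r mulN1r in E1 E2.
rewrite [c]surjective_pairing E1 E2 /psub; congr pair; ring.
Qed.
End Alg.

Section Hull.
Variable R : realType.
Variable s : seq (pt R).
Local Notation n := (size s).

Lemma vtx_ord (i : 'I_n) : vtx s i = nth (0, 0) s i.
Proof. by rewrite /vtx modn_small. Qed.

Lemma hull_sum l (w : pt R) :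
  w.1 * (\sum_(i < n) l i * (nth (0, 0) s i).1) +
  w.2 * (\sum_(i < n) l i * (nth (0, 0) s i).2) =
  \sum_(i < n) l i * dotp w (vtx s i).
Proof.
rewrite !mulr_sumr -big_split /=; apply: eq_bigr => i _.
by rewrite vtx_ord /dotp; ring.
Qed.

Lemma hull_le (w : pt R) (M : R) y : conv_hull s y ->
  (forall k, (k < n)%N -> dotp w (vtx s k) <= M) -> dotp w y <= M.
Proof.
case=> l [l0 [l1 ->]] H; rewrite /dotp /= hull_sum.
apply: (@le_trans _ _ (\sum_(i < n) l i * M)).
  apply: ler_sum => i _; apply: ler_wpM2l; [exact: l0 | exact: H].
by rewrite -mulr_suml l1 mul1r.
Qed.

Lemma hull_eq (w w' : pt R) y : conv_hull s y ->
  (forall k, (k < n)%N -> dotp w (vtx s k) <= 1) ->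
  (forall k, (k < n)%N -> dotp w' (vtx s k) <= 1) ->
  dotp w y = 1 -> dotp w' y = 1 ->
  exists k, [/\ (k < n)%N, dotp w (vtx s k) = 1 & dotp w' (vtx s k) = 1].
Proof.
case=> l [l0 [l1 Ey]] Hw Hw' E E'.
have sumE v : dotp v y = \sum_(i < n) l i * dotp v (vtx s i).
  by rewrite Ey /dotp /= hull_sum.
have Z v : (forall k, (k < n)%N -> dotp v (vtx s k) <= 1) -> dotp v y = 1 ->
    forall i : 'I_n, l i * (1 - dotp v (vtx s i)) = 0.
  move=> Hv Hy.
  have : \sum_(i < n) l i * (1 - dotp v (vtx s i)) = 0.
    rewrite (eq_bigr (fun i : 'I_n => l i - l i * dotp v (vtx s i))); last first.
      by move=> i _; rewrite mulrBr mulr1.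
    by rewrite sumrB l1 -sumE Hy subrr.
  move/psumr_eq0P => H i; apply: H => // j _.
  by apply: mulr_ge0; [exact: l0 | rewrite subr_ge0; exact: Hv].
have [i li] : exists i : 'I_n, l i != 0.
  case: (pickP (fun i : 'I_n => l i != 0)) => [i Hi|H0]; first by exists i.
  exfalso; move: l1; rewrite big1 => [/eqP|i _]; first by rewrite eq_sym oner_eq0.
  by move: (H0 i) => /negbFE/eqP.
exists i; split => //.
  by move/eqP: (Z w Hw E i); rewrite mulf_eq0 (negbTE li) /= subr_eq0 => /eqP <-.
by move/eqP: (Z w' Hw' E' i); rewrite mulf_eq0 (negbTE li) /= subr_eq0 => /eqP <-.
Qed.

Lemma hull_vtx k : (0 < n)%N -> conv_hull s (vtx s k).
Proof.
move=> n0.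
have S (F : nat -> R) :
    \sum_(i < n) (if (i : nat) == (k %% n)%N then 1 else 0) * F i = F ((k %% n)%N).
  rewrite (bigD1 (Ordinal (ltn_pmod k n0))) //= eqxx mul1r big1 ?addr0 //.
  move=> i Hi; rewrite ifF ?mul0r //; apply: contraNF Hi => /eqP Hi.
  by apply/eqP/val_inj.
exists (fun i => if i == (k %% n)%N then 1 else 0); split.
  by move=> i _; case: ifP.
split; first by have := S (fun _ => 1); rewrite /= => E; rewrite -[RHS]E; apply: eq_bigr => i _; rewrite mulr1.
rewrite (S (fun i => (nth (0,0) s i).1)) (S (fun i => (nth (0,0) s i).2)) /vtx; by case: nth.
Qed.
End Hull.

Section Poly.
Variable R : realType.
Variable s : seq (pt R).
Hypothesis Hc : ccw_convex_polygon s.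
Hypothesis Hp : forall x, tau_img (conv_hull s) x <-> polar (conv_hull s) x.
Local Notation n := (size s).
Local Notation p := (vtx s).

Lemma n3 : (3 <= n)%N. Proof. by case: Hc. Qed.
Lemma n0 : (0 < n)%N. Proof. by apply: leq_trans n3. Qed.
Lemma lt1n : (1 < n)%N. Proof. by apply: leq_trans n3. Qed.

Lemma pE j k : (j %% n = k %% n)%N -> p j = p k.
Proof. by rewrite /vtx => ->. Qed.
Arguments pE {j k}.

Lemma modneq i a b : (a < n)%N -> (b < n)%N -> a != b -> ((i + a) %% n != (i + b) %% n)%N.
Proof. by move=> an bn ab; rewrite eqn_modDl !modn_small. Qed.

Lemma modneq0 i a : (0 < a < n)%N -> ((i + a) %% n != i %% n)%N.
Proof. by case/andP=> a0 an; have := @modneq i a 0 an n0; rewrite addn0; apply; rewrite -lt0n. Qed.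

Lemma F3 i j : (j %% n != i %% n)%N -> (j %% n != (i + 1) %% n)%N ->
  0 < det2 (psub (p (i + 1)) (p i)) (psub (p j) (p i)).
Proof.
move=> H1 H2; case: Hc => _ /(_ (i %% n)%N (j %% n)%N (ltn_pmod _ n0) (ltn_pmod _ n0)).
rewrite modnDml H2 H1 => /(_ isT isT).
by rewrite (@pE (i %% n + 1)%N (i + 1)) ?modnDml // (@pE (i %% n)%N i) ?modn_mod // (@pE (j %% n)%N j) ?modn_mod.
Qed.

Lemma detpsub0 (x y : pt R) : det2 x (psub y y) = 0.
Proof. by rewrite /det2 /psub /=; ring. Qed.
Lemma det0psub (x y : pt R) : det2 (psub y y) x = 0.
Proof. by rewrite /det2 /psub /=; ring. Qed.

Lemma F3w i k : 0 <= det2 (psub (p (i + 1)) (p i)) (psub (p k) (p i)).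
Proof.
case: (eqVneq (k %% n) (i %% n))%N => H1.
  by rewrite (pE H1) detpsub0.
case: (eqVneq (k %% n) ((i + 1) %% n))%N => H2.
  by rewrite (pE H2) le_eqVlt; apply/orP; left; apply/eqP; rewrite /det2 /psub /=; ring.
exact/ltW/F3.
Qed.

Lemma F1 k y : conv_hull s y -> det2 (p k) y <= 1.
Proof.
move=> hy.
have P : polar (conv_hull s) (tau (p k)) by apply/Hp; exists (p k); split => //; exact: hull_vtx n0.
by have := P y hy; rewrite /dotp /det2 /tau /= => H; apply: le_trans H; rewrite le_eqVlt; apply/orP; left; apply/eqP; ring.
Qed.

Lemma F1v k m : det2 (p k) (p m) <= 1.
Proof. exact/F1/hull_vtx/n0. Qed.

Lemma dotdet (v x : pt R) : dotp (v.2, - v.1) x = det2 x v.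
Proof. by rewrite /dotp /det2 /=; ring. Qed.

Lemma edge_pos i : 0 < det2 (p i) (p (i + 1)).
Proof.
rewrite ltNge; apply/negP => HD.
set c := p i; set d := p (i + 1); set e := psub d c.
pose w : pt R := (e.2, - e.1).
have Ek k : det2 (p k) e = det2 c d - det2 e (psub (p k) c).
  by rewrite /e /det2 /psub /=; ring.
have Hk k : dotp w (p k) <= det2 c d.
  by rewrite dotdet Ek; have := F3w i k; rewrite -/c -/d -/e; lra.
have Hj : dotp w (p (i + 2)) < det2 c d.
  rewrite dotdet Ek; have := @F3 i (i + 2).
  rewrite (@modneq0 i 2) ?(@modneq i 2 1) ?n3 ?lt1n // -/c -/d -/e => /(_ isT isT); lra.
set m := - dotp w (p (i + 2)).
have m0 : 0 < m by rewrite /m; lra.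
pose x : pt R := ((2 / m) * w.1, (2 / m) * w.2).
have Px : polar (conv_hull s) x.
  move=> y hy.
  have : dotp w y <= 0 by apply: (@hull_le R s w 0 y hy) => k _; apply: le_trans (Hk k) HD.
  have -> : dotp y x = (2 / m) * dotp w y by rewrite /dotp /x /=; ring.
  have : 0 <= 2 / m by apply: divr_ge0; lra.
  nra.
have [y [hy Ex]] := (Hp x).2 Px.
have := F1 (i + 2) y hy.
have -> : det2 (p (i + 2)) y = - dotp (p (i + 2)) x.
  by rewrite Ex /det2 /dotp /tau /=; ring.
have -> : dotp (p (i + 2)) x = (2 / m) * dotp w (p (i + 2)) by rewrite /dotp /x /=; ring.
have -> : dotp w (p (i + 2)) = - m by rewrite /m opprK.
have -> : 2 / m * - m = -2 by field; rewrite gt_eqF.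
lra.
Qed.

Lemma step i : det2 (p i) (p (i + 1)) = 1 -> det2 (p i) (p (i + 2)) = 1 ->
  det2 (p (i + 1)) (p (i + 2)) = 1 /\ det2 (p (i + 1)) (p (i + 3)) = 1.
Proof.
move=> ab ac.
have Hd : 0 < det2 (p (i + 2)) (p (i + 3)) by have := edge_pos (i + 2); rewrite -addnA.
set a := p i; set b := p (i + 1); set c := p (i + 2); set d := p (i + 3).
rewrite -/a -/b -/c -/d in ab ac Hd.
set D := det2 c d; set e := psub d c.
pose q : pt R := (e.2 / D, - e.1 / D).
have dq y : dotp q y = det2 y e / D by rewrite /dotp /det2 /q /=; field; rewrite gt_eqF.
have Pq : polar (conv_hull s) q.
  move=> y hy.
  have -> : dotp y q = dotp q y by rewrite /dotp /=; ring.
  apply: (@hull_le R s q 1 y hy) => k _.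
  rewrite dq ler_pdivrMr // mul1r.
  have := F3w (i + 2) k; rewrite -addnA /= -/c -/d -/e.
  have -> : det2 (p k) e = D - det2 e (psub (p k) c) by rewrite /e /D /det2 /psub /=; ring.
  lra.
have [y [hy Eq]] := (Hp q).2 Pq.
have yc : det2 y c = 1.
  have -> : det2 y c = dotp q c by rewrite Eq /tau /det2 /dotp /=; ring.
  rewrite dq; have -> : det2 c e = D by rewrite /e /D /det2 /psub /=; ring.
  by rewrite divff // gt_eqF.
have yd : det2 y d = 1.
  have -> : det2 y d = dotp q d by rewrite Eq /tau /det2 /dotp /=; ring.
  rewrite dq; have -> : det2 d e = D by rewrite /e /D /det2 /psub /=; ring.
  by rewrite divff // gt_eqF.
have [k [kn Ekc Ekd]] := @hull_eq R s (c.2, - c.1) (d.2, - d.1) y hy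
  (fun k _ => ltac:(rewrite dotdet; exact: F1v))
  (fun k _ => ltac:(rewrite dotdet; exact: F1v))
  ltac:(by rewrite dotdet) ltac:(by rewrite dotdet).
rewrite !dotdet in Ekc Ekd.
case: (eqVneq (k %% n) (i %% n))%N => H1.
  rewrite (pE H1) -/a in Ekd.
  exfalso; apply: (@collinear_contra R _ _ _ _ ab ac Ekd).
  have := @F3 (i + 1) (i + 3); rewrite -addnA /= -/b -/c -/d; apply.
    have -> : (i + 3 = i + 1 + 2)%N by rewrite -addnA.
    by rewrite modneq0 // n3.
  have -> : (i + 3 = i + 2 + 1)%N by rewrite -addnA.
  have -> : (i + (1 + 1) = i + 2)%N by [].
  by rewrite modneq0 // lt1n.
case: (eqVneq (k %% n) ((i + 1) %% n))%N => H2.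
  by rewrite (pE H2) -/b in Ekc Ekd.
exfalso; apply: (@key_contra R _ _ _ _ ab ac Ekc (F1v k (i + 1)) (F1v (i + 1) (i + 2))).
  have := @F3 i (i + 2); rewrite -/a -/b -/c; apply.
    by rewrite (@modneq0 i 2) ?n3.
  by rewrite (@modneq i 2 1) ?n3 ?lt1n.
exact: F3.
Qed.

Lemma vtx_neq j k : (j %% n != k %% n)%N -> p j <> p k.
Proof.
move=> Hjk E.
case: (eqVneq (j %% n) ((k + 1) %% n))%N => H2.
  have := @F3 k (k + 2).
  rewrite (@modneq0 k 2) ?n3 // (@modneq k 2 1) ?n3 ?lt1n // -(pE H2) E.
  by rewrite det0psub ltxx => /(_ isT isT).
by have := @F3 k j Hjk H2; rewrite E detpsub0 ltxx.
Qed.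

Lemma main : (exists i : nat, (i < size s)%N /\
     Lline (vtx s i) (vtx s (i + 1)) /\ Lline (vtx s i) (vtx s (i + 2))) ->
  size s = 6%N.
Proof.
case=> i0 [_ [L1 L2]].
have lin (u x : pt R) : Lline u x -> det2 u x = 1.
  by rewrite /Lline => <-; rewrite /dotp /det2 /tau /=; ring.
have C k : det2 (p (i0 + k)) (p (i0 + k + 1)) = 1 /\ det2 (p (i0 + k)) (p (i0 + k + 2)) = 1.
  elim: k => [|k [IH1 IH2]]; first by rewrite addn0; split; apply: lin.
  have := @step (i0 + k) IH1 IH2.
  by rewrite ?addnS ?addn0 ?addn1 ?addn2 ?addn3.
have Rec k : p (i0 + k + 2) = psub (p (i0 + k + 1)) (p (i0 + k)).
  apply: recur; [exact: (C k).1 | exact: (C k).2 |].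
  by have := (C (k + 1)).1; rewrite !addnA -!addnA.
have Neg k : p (i0 + k + 3) = (- (p (i0 + k)).1, - (p (i0 + k)).2).
  have E1 := Rec (k + 1).
  have -> : (i0 + k + 3 = i0 + (k + 1) + 2)%N by rewrite -!addnA.
  rewrite E1.
  have -> : (i0 + (k + 1) + 1 = i0 + k + 2)%N by rewrite -!addnA.
  rewrite Rec.
  have -> : (i0 + (k + 1) = i0 + k + 1)%N by rewrite addnA.
  by rewrite /psub /=; congr pair; ring.
have p6 : p (i0 + 6) = p i0.
  have := Neg 3; rewrite -addnA /= => ->.
  have := Neg 0; rewrite addn0 => ->.
  by rewrite /= !opprK; case: (p i0).
have p3 : p (i0 + 3) <> p i0.
  have := Neg 0; rewrite addn0 => -> E.
  have := (C 0).1; rewrite addn0.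
  have -> : p i0 = (0, 0).
    move: E; case: (p i0) => x1 x2 /= [E1 E2].
    by congr pair; lra.
  by rewrite /det2 /= !mul0r subrr => /eqP; rewrite eq_sym oner_eq0.
have H6 : (6 %% n = 0)%N.
  apply/eqP; apply/negPn/negP => H.
  apply: (@vtx_neq (i0 + 6) i0) p6.
  by rewrite -{2}[i0]addn0 eqn_modDl mod0n.
have H3 : (3 %% n != 0)%N.
  apply/negP => /eqP H; apply: p3; apply: pE.
  by rewrite -{2}[i0]addn0; apply/eqP; rewrite eqn_modDl mod0n H.
have := n3; move: H6 H3; case: (size s) => [|[|[|[|[|[|[|m]]]]]]] //.
Qed.
End Poly.

Theorem proposition6 (R : realType) (s : seq (pt R)) :
  ccw_convex_polygon s ->
  (forall x, tau_img (conv_hull s) x <-> polar (conv_hull s) x) ->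
  (exists i : nat, (i < size s)%N /\
     Lline (vtx s i) (vtx s (i + 1)) /\ Lline (vtx s i) (vtx s (i + 2))) ->
  size s = 6%N.
Proof. move=> Hc Hp; exact: main. Qed.
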